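(* Let $X$ be a proper, path connected metric space and let $S=\{x_i\}_{i\in I}$ be a discrete subset of $X$. Fix a positive integer $n\le \#(S)$. Then $$\bigcup_{i\in I} B_n(x_i)=X \qquad\text{and}\qquad b_n(x_i)\cap b_n(x_j)=\emptyset \ \text{ whenever } i\neq j.$$
   Context: $(X,d)$ is a metric space. It is proper if for every $x\in X$ the function $d(x,\cdot)$ is a proper map (in particular every closed ball is compact). A subset $S\subseteq X$ is discrete if every compact subset of $X$ contains only finitely many points of $S$. For $x\in X$ and $r>0$ write $N_r(x)=\{y\in X: d(x,y)<r\}$ and $C_r(x)=\{y\in X: d(x,y)=r\}$; $\#(\cdot)$ denotes cardinality. For $x_0\in S$, a positive integer $n\le\#(S)$, and $x\in X$ with $r=d(x,x_0)$, define: $x\in b_n(x_0)$ iff $\#(N_r(x)\cap S)=n-1$ and $C_r(x)\cap S=\{x_0\}$; and $x\in B_n(x_0)$ iff $\#(N_r(x)\cap S)=m$ and $\#(C_r(x)\cap S)=\ell$ for some integers $m\ge 0$, $\ell\ge 1$ with $m+1\le n\le m+\ell$. ($B_n(x_0)$ is called the $n$-th Brillouin zone with base point $x_0$.) *)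

(* Defs.v *)
From Stdlib Require Import Reals List.
Import ListNotations.
Open Scope R_scope.

Section MetricDefs.
Variable X : Type.
Variable d : X -> X -> R.

Definition is_metric : Prop :=
  (forall x y, 0 <= d x y) /\
  (forall x y, d x y = 0 <-> x = y) /\
  (forall x y, d x y = d y x) /\
  (forall x y z, d x z <= d x y + d y z).

Definition m_open (U : X -> Prop) : Prop :=
  forall x, U x -> exists e, 0 < e /\ forall y, d x y < e -> U y.

Definition m_compact (K : X -> Prop) : Prop :=
  forall (I : Type) (U : I -> X -> Prop),
    (forall i, m_open (U i)) ->
    (forall x, K x -> exists i, U i x) ->
    exists l : list I, forall x, K x -> exists i, In i l /\ U i x.

Definition path_connected : Prop :=
  forall x y : X, exists g : R -> X,
    g 0 = x /\ g 1 = y /\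
    forall t, 0 <= t <= 1 -> forall e, 0 < e -> exists delta, 0 < delta /\
      forall s, 0 <= s <= 1 -> Rabs (s - t) < delta -> d (g s) (g t) < e.

Definition card_eq (P : X -> Prop) (k : nat) : Prop :=
  exists l : list X, NoDup l /\ length l = k /\ forall y, P y <-> In y l.

Definition card_ge (P : X -> Prop) (k : nat) : Prop :=
  exists l : list X, NoDup l /\ length l = k /\ forall y, In y l -> P y.

Definition discrete (S : X -> Prop) : Prop :=
  forall K, m_compact K -> exists l : list X, forall y, K y -> S y -> In y l.

Definition N_ball (r : R) (x : X) : X -> Prop := fun y => d x y < r.
Definition C_sph (r : R) (x : X) : X -> Prop := fun y => d x y = r.

Definition b_zone (S : X -> Prop) (n : nat) (x0 : X) : X -> Prop :=
  fun x => let r := d x x0 in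
    card_eq (fun y => N_ball r x y /\ S y) (n - 1)%nat /\
    (forall y, (C_sph r x y /\ S y) <-> y = x0).

Definition B_zone (S : X -> Prop) (n : nat) (x0 : X) : X -> Prop :=
  fun x => let r := d x x0 in
    exists m l : nat,
      card_eq (fun y => N_ball r x y /\ S y) m /\
      card_eq (fun y => C_sph r x y /\ S y) l /\
      (1 <= l)%nat /\ (m + 1 <= n)%nat /\ (n <= m + l)%nat.
End MetricDefs.

Definition Rdist (a b : R) : R := Rabs (a - b).

Definition proper_metric (X : Type) (d : X -> X -> R) : Prop :=
  forall x : X, forall K : R -> Prop, @m_compact R Rdist K ->
    @m_compact X d (fun y => K (d x y)).

(* Main.v *)
Require Import Defs.
From Stdlib Require Import Reals List Lra Lia Classical ClassicalEpsilon.
Open Scope R_scope.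

Lemma fin_card {X : Type} (L : list X) : forall (P : X -> Prop),
  (forall y, P y -> In y L) -> exists l, NoDup l /\ forall y, P y <-> In y l.
Proof.
  induction L as [|a L IH]; intros P HP.
  - exists nil; split; [constructor|]. intros y; split; [apply HP|intros []].
  - destruct (IH (fun y => P y /\ y <> a)) as [l' [Hnd Hi]].
    { intros y [Py Hya]. destruct (HP y Py); [congruence|auto]. }
    destruct (classic (P a)) as [Pa|nPa].
    + exists (a :: l'); split.
      * constructor; auto. intros Hin. apply Hi in Hin. tauto.
      * intros y; split.
        -- intros Py. destruct (classic (y = a)); [left; auto|right; apply Hi; auto].
        -- intros [<-|Hin]; auto. apply Hi in Hin; tauto.
    + exists l'; split; auto. intros y; split.
      * intros Py. apply Hi. split; auto. intros ->; auto.
      * intros Hin; apply Hi in Hin; tauto.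
Qed.

Lemma argmin {X : Type} (f : X -> R) (Q : X -> Prop) (L : list X) :
  (exists y, In y L /\ Q y) ->
  exists y0, In y0 L /\ Q y0 /\ forall y, In y L -> Q y -> f y0 <= f y.
Proof.
  induction L as [|a L IH]; intros Hex.
  - destruct Hex as [y [[] _]].
  - destruct (classic (exists y, In y L /\ Q y)) as [H|H].
    + destruct (IH H) as [y1 [H1 [Q1 M1]]].
      destruct (classic (Q a /\ f a <= f y1)) as [Ha|Ha].
      * exists a; split; [left; auto|split; [tauto|]].
        intros y [<-|Hy] Qy; [lra|]. specialize (M1 y Hy Qy). lra.
      * exists y1; split; [right; auto|split; auto].
        intros y [<-|Hy] Qy; auto.
        destruct (Rle_dec (f y1) (f a)); auto. exfalso; apply Ha; split; auto; lra.
    + destruct Hex as [y [[Hya|Hy] Qy]]; [subst y|].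
      * exists a; split; [left; auto|split; auto].
        intros z [<-|Hz] Qz; [lra|]. exfalso; apply H; eauto.
      * exfalso; apply H; eauto.
Qed.

Lemma compact_interval (a b : R) : @m_compact R Rdist (fun t => a <= t <= b).
Proof.
  intros I U HU Hcov.
  destruct (Rle_dec a b) as [Hab|Hab].
  2:{ exists nil. intros x Hx. lra. }
  destruct (Hcov a) as [i0 _]; [lra|].
  assert (Hch : forall y, exists i, (a <= y <= b -> U i y)).
  { intros y. destruct (classic (a <= y <= b)) as [Hy|Hy].
    - destruct (Hcov y Hy) as [i Hi]; exists i; auto.
    - exists i0; tauto. }
  set (ch := fun y => proj1_sig (constructive_indefinite_description _ (Hch y))).
  assert (Hchs : forall y, a <= y <= b -> U (ch y) y).
  { intros y Hy. unfold ch. destruct constructive_indefinite_description; simpl; auto. }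
  assert (cf : forall y, (exists z, (a <= y <= b /\ U (ch y) z)) -> a <= y <= b).
  { intros y [z [Hy _]]; auto. }
  set (fam := mkfamily (fun y => a <= y <= b) (fun y z => a <= y <= b /\ U (ch y) z) cf).
  destruct (compact_P3 a b fam) as [D [Hcv [lR HlR]]].
  - split.
    + intros x Hx. exists x. simpl. auto.
    + intros y z [Hy Hz]. simpl in *.
      destruct (HU (ch y) z Hz) as [e [He Hball]].
      exists (mkposreal e He). intros w Hw. unfold disc in Hw; simpl in Hw.
      split; auto. apply Hball. unfold Rdist. rewrite Rabs_minus_sym. auto.
  - exists (map ch lR). intros x Hx.
    destruct (Hcv x Hx) as [y [[Hy Hux] Dy]]. simpl in *.
    exists (ch y); split; auto. apply in_map. apply HlR. split; auto.
Qed.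

Lemma lt_case (X : Type) (d : X -> X -> R) (S : X -> Prop) (n : nat) (hn1 : (1 <= n)%nat)
  (xi xj x : X) : d x xi < d x xj -> S xi ->
  b_zone X d S n xi x -> b_zone X d S n xj x -> False.
Proof.
  intros Hlt Si [[li [Hndi [Hli Hi]]] _] [[lj [Hndj [Hlj Hj]]] _].
  assert (Hnd : NoDup (xi :: li)).
  { constructor; auto. intros Hin. apply Hi in Hin. unfold N_ball in Hin. lra. }
  assert (Hinc : incl (xi :: li) lj).
  { intros y [<-|Hy]; apply Hj; unfold N_ball; split; auto.
    apply Hi in Hy; unfold N_ball in Hy; lra. apply Hi in Hy; tauto. }
  pose proof (NoDup_incl_length Hnd Hinc). simpl in H. lia.
Qed.

Theorem mainTheorem1 (X : Type) (d : X -> X -> R)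
  (hmet : @is_metric X d) (hprop : @proper_metric X d) (hpc : @path_connected X d)
  (S : X -> Prop) (hdisc : @discrete X d S)
  (n : nat) (hn1 : (1 <= n)%nat) (hnS : @card_ge X S n) :
  (forall x : X, exists x0, S x0 /\ @B_zone X d S n x0 x) /\
  (forall xi xj : X, S xi -> S xj -> xi <> xj ->
     forall x, ~ (@b_zone X d S n xi x /\ @b_zone X d S n xj x)).
Proof.
  destruct hmet as [dpos _].
  split.
  - intros x. destruct hnS as [l0 [Hnd0 [Hlen0 HS0]]].
    destruct (argmin (fun y => - d x y) (fun _ => True) l0) as [ys [Hys [_ Mys]]].
    { destruct l0 as [|a l0]; simpl in Hlen0; [lia|]. exists a; split; [left|]; auto. }
    set (R0 := d x ys).
    destruct (hdisc _ (hprop x _ (compact_interval 0 R0))) as [L HL].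
    destruct (fin_card L (fun y => S y /\ d x y <= R0)) as [Lb [HndB HLb]].
    { intros y [Sy Hy]. apply HL; auto. }
    set (Q := fun y => S y /\ d x y <= R0 /\ exists k,
          card_eq X (fun z => d x z <= d x y /\ S z) k /\ (n <= k)%nat).
    destruct (argmin (fun y => d x y) Q Lb) as [y0 [Hy0 [Qy0 My0]]].
    { exists ys. assert (S ys) by (apply HS0; auto).
      split; [apply HLb; split; auto; unfold R0; lra|].
      split; auto. split; [unfold R0; lra|].
      destruct (fin_card Lb (fun z => d x z <= d x ys /\ S z)) as [lc [Hndc Hc]].
      { intros z [Hz Sz]; apply HLb; auto. }
      exists (length lc). split. exists lc; auto.
      rewrite <- Hlen0. apply NoDup_incl_length; auto.
      intros z Hz. apply Hc. split; auto. specialize (Mys z Hz I). lra. }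
    destruct Qy0 as [Sy0 [Hy0R [k [[lk [Hndk [Hlk Hk]]] Hnk]]]].
    set (r := d x y0).
    destruct (fin_card Lb (fun z => d x z < r /\ S z)) as [l1 [Hnd1 H1]].
    { intros z [Hz Sz]; apply HLb; split; auto. unfold r in Hz; lra. }
    destruct (fin_card Lb (fun z => d x z = r /\ S z)) as [l2 [Hnd2 H2]].
    { intros z [Hz Sz]; apply HLb; split; auto. unfold r in Hz; lra. }
    exists y0; split; auto.
    exists (length l1), (length l2).
    split; [exists l1; auto|].
    split; [exists l2; auto|].
    split.
    { assert (In y0 l2) by (apply H2; auto). destruct l2; simpl in *; [contradiction|lia]. }
    split.
    + destruct (Nat.lt_ge_cases (length l1) n) as [Hc|Hc]; [lia|exfalso].
      destruct (argmin (fun y => - d x y) (fun _ => True) l1) as [y1 [Hy1 [_ My1]]].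
      { destruct l1 as [|a l1]; simpl in Hc; [lia|]. exists a; split; [left|]; auto. }
      pose proof Hy1 as Hy1'. apply H1 in Hy1' as [Hd1 Sy1].
      assert (HQ : Q y1).
      { split; auto. split; [unfold r in Hd1; lra|].
        destruct (fin_card Lb (fun z => d x z <= d x y1 /\ S z)) as [lc [Hndc Hc']].
        { intros z [Hz Sz]; apply HLb; split; auto. unfold r in Hd1; lra. }
        exists (length lc). split. exists lc; auto.
        apply (Nat.le_trans _ (length l1)); auto. apply NoDup_incl_length; auto.
        intros z Hz. apply Hc'. specialize (My1 z Hz I). apply H1 in Hz. split; [lra|tauto]. }
      assert (In y1 Lb) by (apply HLb; split; auto; unfold r in Hd1; lra).
      specialize (My0 y1 H HQ). unfold r in Hd1. lra.
    + apply (Nat.le_trans _ (length lk)). lia.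
      rewrite <- length_app. apply NoDup_incl_length; auto.
      intros z Hz. apply Hk in Hz as [Hz Sz]. apply in_or_app.
      destruct (Rle_lt_or_eq _ _ Hz); [left; apply H1|right; apply H2]; auto.
  - intros xi xj Si Sj Hne x [Hbi Hbj].
    destruct (Rtotal_order (d x xi) (d x xj)) as [Hlt|[Heq|Hgt]].
    + eapply lt_case; eauto.
    + apply Hne. symmetry. apply (proj2 Hbi). unfold C_sph. auto.
    + eapply lt_case with (xi := xj) (xj := xi); eauto.
Qed.
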